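(* In the depth-3 instance described below, let $s_e$ denote the probability that the edge $e$ belongs to the set $A$ produced by the shadow distribution. Then for every edge $e\in E$, $x_e\le s_e\le 6x_e$.
   Context: Depth-3 instance: fix a small constant $\rho>0$ and a large integer $m$ with $\rho m\in\mathbb N$, ground set $[m]$. Layers: $L_0=\{s\}$ ($S_s=\emptyset$); $L_1$ has one vertex $u$ for each $S_u\subseteq[m]$ with $|S_u|=\rho m$; $L_2$ one vertex for each subset of size $2\rho m$; $L_3$ (the sinks) one vertex for each subset of size $\rho m$. Edges: $s$ to every vertex of $L_1$; $(u,v)$ with $u\in L_1,v\in L_2$ iff $S_u\subseteq S_v$; $(u,v)$ with $u\in L_2,v\in L_3$ iff $S_v\subseteq S_u$. For an edge $e=(u,v)$ write $S_e=S_v$, and say $e\in L_i$ if $v\in L_i$. $D(e)$ denotes the set of edges $(a,b)$ such that $a$ is reachable by a directed path (possibly of length 0) from the endpoint of $e$. Assignment solution: $x_e=\binom{(1-\rho)m}{\rho m}^{-1}$ for $e\in L_1$, $x_e=\binom{(1-\rho)m}{\rho m}^{-1}\binom{2\rho m}{\rho m}^{-1}$ for $e\in L_2$, $x_e=\binom{(1-\rho)m}{\rho m}^{-1}$ for $e\in L_3$. Subtree solutions $x^{(e)}$: for $e\in L_1$, $x^{(e)}_{e'}=1$ if $e'=e$; $\binom{2\rho m}{\rho m}^{-1}$ if $e'\in L_2\cap D(e)$; $\frac{\binom{(1-\rho)m}{\rho m}}{\binom{m}{\rho m}}\binom{m-2\rho m+|S_{e'}\cap S_e|}{|S_{e'}\cap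 S_e|}^{-1}$ if $e'\in L_3\cap D(e)$; $0$ otherwise. For $e\in L_2$, $x^{(e)}_{e'}=1$ if $e'=e$ or $e'\in L_3\cap D(e)$, else $0$. For $e\in L_3$, $x^{(e)}_{e'}=1$ iff $e'=e$, else $0$. Shadow distribution: choose a random set $S$ containing each edge $e$ independently with probability $x_e$; for each $e\in S$ independently draw a set $S_e$ containing each edge $e'$ independently with probability $x^{(e)}_{e'}$; output $A=\bigcup_{e\in S}S_e$. *)

(* Defs.v *)
From HB Require Import structures.
From mathcomp Require Import all_boot all_order all_algebra.
Set Implicit Arguments. Unset Strict Implicit. Unset Printing Implicit Defensive.
Import Order.TTheory GRing.Theory Num.Theory.
Local Open Scope ring_scope.

(* Depth-3 instance.  Ground set [m] = 'I_m ; k = rho * m (so rho = k/m).  *)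
Section Depth3.
Variables (R : realFieldType) (m k : nat).

Definition vtx : finType := ('I_4 * {set 'I_m})%type.
Definition layer (v : vtx) : nat := val v.1.
Definition Sv (v : vtx) : {set 'I_m} := v.2.

Definition valid_vtx (v : vtx) : bool :=
  match layer v with
  | 0 => Sv v == set0
  | 1 => #|Sv v| == k
  | 2 => #|Sv v| == k.*2
  | _ => #|Sv v| == k
  end.

Definition adj (u v : vtx) : bool :=
  [&& valid_vtx u, valid_vtx v &
   [|| (layer u == 0%N) && (layer v == 1%N),
       [&& layer u == 1%N, layer v == 2%N & Sv u \subset Sv v] |
       [&& layer u == 2%N, layer v == 3%N & Sv v \subset Sv u]]].

Definition edge : finType := {p : vtx * vtx | adj p.1 p.2}.
Definition tail (e : edge) : vtx := (val e).1.
Definition head (e : edge) : vtx := (val e).2.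
Definition Se (e : edge) : {set 'I_m} := Sv (head e).
Definition elayer (e : edge) : nat := layer (head e).

Definition reach : rel vtx := connect adj.
Definition inD (e f : edge) : bool := reach (head e) (tail f).

Definition binR (n r : nat) : R := ('C(n, r))%:R.

Definition xa (e : edge) : R :=
  match elayer e with
  | 2 => (binR (m - k) k)^-1 * (binR k.*2 k)^-1
  | _ => (binR (m - k) k)^-1   (* layers 1 and 3 *)
  end.

Definition xsub (e e' : edge) : R :=
  match elayer e with
  | 1 =>
      if e' == e then 1
      else if inD e e' then
        match elayer e' with
        | 2 => (binR k.*2 k)^-1
        | 3 => let j := #|Se e' :&: Se e| in
               (binR (m - k) k / binR m k) * (binR (m - k.*2 + j) j)^-1
        | _ => 0
        end
      else 0
  | 2 => if (e' == e) || ((elayer e' == 3%N) && inD e e') then 1 else 0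
  | _ => if e' == e then 1 else 0
  end.

Definition setprob (p : edge -> R) (T : {set edge}) : R :=
  \prod_(f : edge) (if f \in T then p f else 1 - p f).

(* An outcome is (S, F): S is the random set of edges,
   F e is the set S_e drawn for e (drawn for every e, but only used when
   e \in S, which does not change the distribution of A). *)
Definition outcome : finType := ({set edge} * {ffun edge -> {set edge}})%type.

Definition shadow_weight (w : outcome) : R :=
  setprob xa w.1 * \prod_(e : edge) setprob (xsub e) (w.2 e).

Definition shadowA (w : outcome) : {set edge} := \bigcup_(e in w.1) w.2 e.

Definition s_prob (e : edge) : R :=
  \sum_(w : outcome) shadow_weight w * (e \in shadowA w)%:R.

End Depth3.

(* Main.v *)
Require Import Defs.
From HB Require Import structures.
From mathcomp Require Import all_boot all_order all_algebra.
From mathcomp Require Import zify ring lra.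
Import Order.TTheory GRing.Theory Num.Theory.
Local Open Scope ring_scope.
Set Implicit Arguments. Unset Strict Implicit. Unset Printing Implicit Defensive.
Notation hd := Defs.head.


Lemma sum_set_prod (R : realFieldType) (I : finType) (F : I -> bool -> R) :
  \sum_(T : {set I}) \prod_i F i (i \in T) = \prod_i (F i true + F i false).
Proof.
have -> : \prod_i (F i true + F i false) = \prod_i \sum_(b : bool) F i b.
  by apply: eq_bigr => i _; rewrite big_bool.
rewrite bigA_distr_bigA /=.
rewrite (reindex (fun g : {ffun I -> bool} => [set x | g x])) /=.
  by apply: eq_bigr => g _; apply: eq_bigr => i _; rewrite inE.
exists (fun T : {set I} => [ffun x => x \in T]) => [g _ | T _].
  by apply/ffunP => x; rewrite ffunE inE.
by apply/setP => x; rewrite inE ffunE.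
Qed.

Lemma sum_set_prod_ind (R : realFieldType) (I : finType) (F : I -> bool -> R) a :
  \sum_(T : {set I}) (\prod_i F i (i \in T)) * (a \in T)%:R
  = F a true * \prod_(i | i != a) (F i true + F i false).
Proof.
pose G i b := F i b * (if i == a then b%:R else 1).
transitivity (\sum_(T : {set I}) \prod_i G i (i \in T)).
  apply: eq_bigr => T _; rewrite /G big_split /=; congr (_ * _).
  rewrite (bigD1 a) //= eqxx big1 ?mulr1 // => i /negbTE ->; done.
rewrite sum_set_prod (bigD1 a) //= /G eqxx mulr1 mulr0 addr0; congr (_ * _).
by apply: eq_bigr => i /negbTE ->; rewrite !mulr1.
Qed.


Lemma sum_setprob (R : realFieldType) m k (p : edge m k -> R) :
  \sum_T setprob p T = 1.
Proof.
rewrite /setprob (sum_set_prod (fun i (b : bool) => if b then p i else 1 - p i)).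
by rewrite big1 // => i _; rewrite subrKC.
Qed.

Lemma sum_setprob_ind (R : realFieldType) m k (p : edge m k -> R) a :
  \sum_T setprob p T * (a \in T)%:R = p a.
Proof.
rewrite /setprob (sum_set_prod_ind (fun i (b : bool) => if b then p i else 1 - p i)).
by rewrite big1 ?mulr1 // => i _; rewrite subrKC.
Qed.

Lemma setprob_ge0 (R : realFieldType) m k (p : edge m k -> R) T :
  (forall f, 0 <= p f <= 1) -> 0 <= setprob p T.
Proof.
move=> H; apply: prodr_ge0 => i _; have /andP[h0 h1] := H i.
by case: (i \in T) => //; rewrite subr_ge0.
Qed.

Lemma marg (R : realFieldType) m k (f a : edge m k) :
  \sum_(w : outcome m k) shadow_weight R w * ((f \in w.1) && (a \in w.2 f))%:R
  = xa R f * xsub R f a.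
Proof.
pose G (w : outcome m k) := shadow_weight R w * ((f \in w.1) && (a \in w.2 f))%:R.
rewrite (_ : \sum_(w : outcome m k) _ = \sum_(S : {set edge m k}) \sum_(Fm : {ffun edge m k -> {set edge m k}}) G (S, Fm)); last first.
  by rewrite pair_bigA; apply: eq_bigr => -[].
rewrite /G /=.
transitivity (\sum_(S : {set edge m k}) \sum_(Fm : {ffun edge m k -> {set edge m k}})
   (setprob (@xa R m k) S * (f \in S)%:R) *
   \prod_e (setprob (@xsub R m k e) (Fm e) * (if e == f then (a \in Fm e)%:R else 1))).
  apply: eq_bigr => S _; apply: eq_bigr => Fm _.
  have E : \prod_e (setprob (@xsub R m k e) (Fm e) * (if e == f then (a \in Fm e)%:R else 1))
     = \prod_e setprob (@xsub R m k e) (Fm e) * (a \in Fm f)%:R.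
    rewrite big_split /= [X in _ * X](bigD1 f) //= eqxx [X in _ * (_ * X)]big1 ?mulr1 //.
    by move=> i /negbTE ->.
  rewrite E /shadow_weight /=.
  by case: (f \in S); case: (a \in Fm f); rewrite /= ?mulr1 ?mulr0 ?mul0r ?mul1r.
rewrite -big_distrlr /= sum_setprob_ind.
rewrite -(bigA_distr_bigA (fun e X => setprob (@xsub R m k e) X * (if e == f then (a \in X)%:R else 1))) /=.
rewrite (bigD1 f) //= eqxx sum_setprob_ind big1 ?mulr1 // => i /negbTE ->.
by under eq_bigr do rewrite mulr1; rewrite sum_setprob.
Qed.

Lemma inv_nat01 (R : realFieldType) (n : nat) : 0 <= (n%:R : R)^-1 <= 1.
Proof.
case: n => [|n]; first by rewrite invr0 lexx ler01.
rewrite invr_ge0 ler0n /= invf_le1 ?ltr0Sn //.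
by rewrite ler1n.
Qed.

Lemma mul01 (R : realFieldType) (x y : R) : 0 <= x <= 1 -> 0 <= y <= 1 -> 0 <= x * y <= 1.
Proof.
move=> /andP[x0 x1] /andP[y0 y1]; rewrite mulr_ge0 //=.
by rewrite mulr_ile1.
Qed.

Lemma xa01 (R : realFieldType) m k (e : edge m k) : 0 <= xa R e <= 1.
Proof.
rewrite /xa; case: (elayer e) => [|[|[|n]]]; rewrite ?inv_nat01 //.
by apply: mul01; apply: inv_nat01.
Qed.

Lemma ratio01 (R : realFieldType) (a b : nat) : (a <= b)%N -> 0 <= (a%:R : R) / b%:R <= 1.
Proof.
move=> ab; case: b ab => [|b] ab.
  by rewrite invr0 mulr0 lexx ler01.
rewrite divr_ge0 ?ler0n //= ler_pdivrMr ?ltr0Sn // mul1r ler_nat //.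
Qed.

Lemma xsub01 (R : realFieldType) m k (e f : edge m k) : 0 <= xsub R e f <= 1.
Proof.
have c01 : forall b : bool, 0 <= (if b then 1 else 0 : R) <= 1.
  by case; rewrite lexx ler01.
rewrite /xsub; case: (elayer e) => [|[|[|n]]] //.
case: (f == e); first by rewrite lexx ler01.
case: (inD e f); last by rewrite lexx ler01.
case: (elayer f) => [|[|[|[|n]]]]; rewrite ?lexx ?ler01 ?inv_nat01 //.
apply: mul01; last exact: inv_nat01.
apply: ratio01; apply: leq_bin2l; exact: leq_subr.
Qed.

Lemma weight_ge0 (R : realFieldType) m k (w : outcome m k) : 0 <= shadow_weight R w.
Proof.
rewrite /shadow_weight mulr_ge0 ?setprob_ge0 //; first exact: xa01.
by apply: prodr_ge0 => e _; apply: setprob_ge0 => f; apply: xsub01.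
Qed.

Lemma s_lower (R : realFieldType) m k (e : edge m k) : xa R e * xsub R e e <= s_prob R e.
Proof.
rewrite -marg /s_prob; apply: ler_sum => w _; apply: ler_wpM2l; first exact: weight_ge0.
rewrite ler_nat.
case: (boolP ((e \in w.1) && (e \in w.2 e))) => [/andP[H1 H2]|_] //.
by rewrite (_ : e \in shadowA w) //; apply/bigcupP; exists e.
Qed.

Lemma s_upper (R : realFieldType) m k (e : edge m k) :
  s_prob R e <= \sum_f xa R f * xsub R f e.
Proof.
under [X in _ <= X]eq_bigr do rewrite -marg.
rewrite exchange_big /=; apply: ler_sum => w _; rewrite -big_distrr /=.
apply: ler_wpM2l; first exact: weight_ge0.
case: (boolP (e \in shadowA w)) => [/bigcupP[f fS efS]|_]; last by apply: sumr_ge0.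
by rewrite (bigD1 f) //= fS efS /= lerDl; apply: sumr_ge0.
Qed.


Lemma sum_const_pred (R : realFieldType) (I : finType) (P : pred I) (x : R) :
  \sum_(i | P i) x = #|[set i | P i]|%:R * x.
Proof.
rewrite (eq_bigl (fun i => i \in [set i | P i])) ?sumr_const ?mulr_natl //.
by move=> i; rewrite inE.
Qed.

Lemma card_fiber (T : finType) (V W J : {set T}) k :
  W \subset V -> #|W| = k -> #|V| = k.*2 -> J \subset W ->
  #|[set U : {set T} | (U \subset V) && (#|U| == k) && (U :&: W == J)]| = 'C(k, k - #|J|)%N.
Proof.
move=> WV Wk Vk JW.
have Dk : #|V :\: W| = k.
  by have := cardsID W V; rewrite (setIidPr WV) Wk Vk -addnn => /addnI.
have Jk : (#|J| <= k)%N by rewrite -Wk subset_leq_card.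
have -> : [set U : {set T} | (U \subset V) && (#|U| == k) && (U :&: W == J)] =
    (fun K => J :|: K) @: [set K : {set T} | K \subset V :\: W & #|K| == (k - #|J|)%N].
  apply/setP => U; rewrite inE; apply/idP/imsetP.
    move=> /andP[/andP[UV /eqP Uk] /eqP UJ]; exists (U :\: W).
      rewrite inE setSD //=; apply/eqP.
      by rewrite -Uk -UJ -(cardsID W U) addKn.
    by rewrite -UJ setID.
  case=> K; rewrite inE => /andP[KD /eqP Kc] ->.
  have KW : K :&: W = set0.
    apply/setP => x; rewrite !inE; case: (boolP (x \in K)) => //= /(subsetP KD).
    by rewrite !inE => /andP[/negbTE ->].
  have JK : J :&: K = set0.
    apply/setP => x; rewrite !inE; case: (boolP (x \in J)) => //= /(subsetP JW) xW.
    by apply/negP => xK; have := KW; move/setP/(_ x); rewrite !inE xK xW.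
  rewrite subUset (subset_trans JW WV) (subset_trans KD (subsetDl _ _)) /=.
  rewrite cardsU JK cards0 subn0 Kc subnKC // eqxx /=.
  by rewrite setIUl KW setU0 (setIidPl JW).
rewrite card_in_imset; first by rewrite cards_draws Dk.
move=> K1 K2; rewrite !inE => /andP[K1D _] /andP[K2D _] E.
have F : forall K : {set T}, K \subset V :\: W -> (J :|: K) :\: W = K.
  move=> K KD; apply/setP => x; rewrite !inE.
  case: (boolP (x \in K)) => xK.
    by move: (subsetP KD x xK); rewrite !inE => /andP[-> _]; rewrite orbT.
  rewrite orbF; case: (boolP (x \in J)) => [xJ|]; last by rewrite andbF.
  by rewrite (subsetP JW x xJ).
by rewrite -(F _ K1D) -(F _ K2D) E.
Qed.

Lemma sum_by_inter (R : realFieldType) (T : finType) (V W : {set T}) k (G : nat -> R) :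
  W \subset V -> #|W| = k -> #|V| = k.*2 ->
  \sum_(U : {set T} | (U \subset V) && (#|U| == k)) G #|U :&: W|
  = \sum_(j < k.+1) ('C(k, j) * 'C(k, k - j))%:R * G j.
Proof.
move=> WV Wk Vk.
rewrite (partition_big (fun U => U :&: W) (fun J => J \subset W)) /=; last first.
  by move=> U _; apply: subsetIr.
transitivity (\sum_(J : {set T} | J \subset W) 'C(k, k - #|J|)%:R * G #|J|).
  apply: eq_bigr => J JW.
  rewrite (eq_bigr (fun _ => G #|J|)); last by move=> U /andP[_ /eqP ->].
  by rewrite sum_const_pred card_fiber.
rewrite (partition_big (fun J : {set T} => inord #|J| : 'I_k.+1) xpredT) //=.
apply: eq_bigr => j _.
have cJ : forall J : {set T}, J \subset W -> (inord #|J| == j :> 'I_k.+1) = (#|J| == j).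
  move=> J JW; have lt : (#|J| < k.+1)%N by rewrite ltnS -Wk subset_leq_card.
  apply/eqP/eqP => [<-|E]; first by rewrite inordK.
  by apply: val_inj; rewrite /= inordK // E.
rewrite (eq_bigr (fun _ => 'C(k, k - j)%:R * G j)); last first.
  by move=> J /andP[JW]; rewrite cJ // => /eqP ->.
rewrite sum_const_pred.
rewrite (_ : [set J : {set T} | (J \subset W) && (inord #|J| == j)] = [set J : {set T} | J \subset W & #|J| == j]); last first.
  by apply/setP => J; rewrite !inE; case: (boolP (J \subset W)) => //= JW; rewrite cJ.
by rewrite cards_draws Wk natrM mulrA.
Qed.

Lemma fact_neq0 (R : realFieldType) n : (n`!%:R : R) != 0.
Proof. by rewrite pnatr_eq0 -lt0n fact_gt0. Qed.

Lemma binR_fact (R : realFieldType) N r : (r <= N)%N ->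
  ('C(N, r)%:R : R) = N`!%:R / (r`!%:R * (N - r)`!%:R).
Proof.
move=> rN; rewrite -(bin_fact rN) !natrM mulfK //.
by rewrite mulf_neq0 ?fact_neq0.
Qed.

Lemma bin_term (R : realFieldType) n k j : (j <= k)%N ->
  ('C(k, k - j)%:R : R) / 'C(n + j, j)%:R = 'C(n + k, k - j)%:R / 'C(n + k, k)%:R.
Proof.
move=> jk.
rewrite !binR_fact ?leq_subr ?leq_addl //; last by rewrite (leq_trans (leq_subr _ _)) ?leq_addl.
have -> : (k - (k - j) = j)%N by lia.
have -> : (n + j - j = n)%N by lia.
have -> : (n + k - k = n)%N by lia.
have -> : (n + k - (k - j) = n + j)%N by lia.
have := fact_neq0 R; move=> F.
field.
by rewrite !F.
Qed.

Lemma sum_vdm (R : realFieldType) n k :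
  \sum_(j < k.+1) ('C(k, j) * 'C(k, k - j))%:R * ('C(n + j, j)%:R : R)^-1
  = 'C(k + (n + k), k)%:R / 'C(n + k, k)%:R.
Proof.
transitivity (\sum_(j < k.+1) ('C(k, j) * 'C(n + k, k - j))%:R / ('C(n + k, k)%:R : R)).
  apply: eq_bigr => j _; rewrite !natrM -!mulrA; congr (_ * _).
  by apply: bin_term; rewrite -ltnS.
by rewrite -mulr_suml -natr_sum binomial.Vandermonde.
Qed.

Lemma sum_inj_le (R : realFieldType) (I J : finType) (P : pred I) (Q : pred J)
  (h : I -> J) (g : J -> R) :
  {in P &, injective h} -> (forall i, P i -> Q (h i)) -> (forall j, Q j -> 0 <= g j) ->
  \sum_(i | P i) g (h i) <= \sum_(j | Q j) g j.
Proof.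
move=> inj PQ g0.
have E := big_imset (R:=R) (idx:=0) (aop:=+%R) g inj.
rewrite (_ : \sum_(i | P i) g (h i) = \sum_(i in P) g (h i)) // -E.
rewrite big_mkcond [X in _ <= X]big_mkcond /=; apply: ler_sum => j _.
case: (boolP (j \in h @: P)) => [/imsetP[i Pi ->]|_].
  by rewrite PQ.
by case: (boolP (Q j)) => // /g0.
Qed.

Lemma card_inj_le (I J : finType) (P : pred I) (Q : pred J) (h : I -> J) :
  {in P &, injective h} -> (forall i, P i -> Q (h i)) ->
  (#|[set i | P i]| <= #|[set j | Q j]|)%N.
Proof.
move=> inj PQ.
have inj' : {in [set i | P i] &, injective h}.
  by move=> x y; rewrite !inE; apply: inj.
rewrite -(card_in_imset inj'); apply: subset_leq_card; apply/subsetP => j /imsetP[i].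
by rewrite !inE => /PQ Q' ->.
Qed.



Lemma vtx_eq m (u v : vtx m) : layer u = layer v -> Sv u = Sv v -> u = v.
Proof.
case: u v => [i U] [j V]; rewrite /layer /Sv /= => E ->.
by congr (_, _); apply: val_inj.
Qed.

Lemma edge_eq m k (f1 f2 : edge m k) : tail f1 = tail f2 -> hd f1 = hd f2 -> f1 = f2.
Proof.
case: f1 f2 => [[a b] H1] [[c d] H2]; rewrite /tail /hd /Defs.head /= => E1 E2.
by apply: val_inj => /=; rewrite E1 E2.
Qed.

Lemma layer_lt4 m (v : vtx m) : (layer v < 4)%N.
Proof. by rewrite /layer; case: v => i U /=. Qed.

Lemma adj_inv m k (u v : vtx m) : adj k u v ->
  [\/ [/\ layer u = 0%N, Sv u = set0, layer v = 1%N & #|Sv v| = k],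
      [/\ layer u = 1%N, #|Sv u| = k, layer v = 2%N, #|Sv v| = k.*2 & Sv u \subset Sv v] |
      [/\ layer u = 2%N, #|Sv u| = k.*2, layer v = 3%N, #|Sv v| = k & Sv v \subset Sv u]].
Proof.
rewrite /adj /valid_vtx; case/and3P => Hu Hv /or3P[/andP[/eqP lu /eqP lv]|/and3P[/eqP lu /eqP lv S]|/and3P[/eqP lu /eqP lv S]];
  rewrite lu in Hu; rewrite lv in Hv; move/eqP: Hu => Hu; move/eqP: Hv => Hv.
- by apply: Or31.
- by apply: Or32.
- by apply: Or33.
Qed.

Definition Qr m (x y : vtx m) : bool :=
  (x == y) || ((layer x < layer y)%N &&
    (((layer x == 1%N) && (layer y == 2%N)) ==> (Sv x \subset Sv y))).

Lemma Qr_step m k (x y z : vtx m) : Qr x y -> adj k y z -> Qr x z.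
Proof.
move=> Q /adj_inv H; case/orP: Q => [/eqP ->| /andP[lt imp]].
  apply/orP; right.
  by case: H => [[-> _ -> _]|[-> _ -> _ S]|[-> _ -> _ _]].
apply/orP; right.
case: H => [[lu _ lv _]|[lu _ lv _ S]|[lu _ lv _ _]]; rewrite lu in lt; rewrite lv.
- by [].
- have -> : (layer x == 1%N) = false by lia.
  by rewrite /=; lia.
- have -> : (3 == 2)%N = false by [].
  by rewrite andbF /=; lia.
Qed.

Lemma reachQ m k (x y : vtx m) : reach k x y -> Qr x y.
Proof.
move/connectP => [p Hp ->].
have aux : forall (q : seq (vtx m)) x1, Qr x x1 -> path (adj k) x1 q -> Qr x (last x1 q).
  elim=> [|z q IH] x1 Q //= /andP[a pq].
  by apply: IH => //; apply: Qr_step a.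
by apply: aux => //; rewrite /Qr eqxx.
Qed.

Lemma xsub_diag (R : realFieldType) m k (e : edge m k) : xsub R e e = 1.
Proof. by rewrite /xsub eqxx; case: (elayer e) => [|[|[|n]]]. Qed.

Lemma t_ge0 (R : realFieldType) m k (f e : edge m k) : 0 <= xa R f * xsub R f e.
Proof.
have /andP[h1 _] := xa01 R f; have /andP[h2 _] := xsub01 R f e.
exact: mulr_ge0.
Qed.

Lemma decomp (R : realFieldType) m k (e : edge m k) :
  \sum_f xa R f * xsub R f e <= xa R e * xsub R e e
     + \sum_(f | elayer f == 1%N) xa R f * xsub R f e
     + \sum_(f | elayer f == 2%N) xa R f * xsub R f e.
Proof.
rewrite (bigD1 e) //= -addrA lerD2l.
rewrite big_mkcond [X in _ <= X + _]big_mkcond [X in _ <= _ + X]big_mkcond -big_split /=.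
apply: ler_sum => f _.
case: (eqVneq f e) => [->|ne] /=.
  by case: (elayer e == 1%N); case: (elayer e == 2%N); rewrite ?add0r ?addr0 ?t_ge0 ?lexx ?addr_ge0 ?t_ge0.
have ef : (e == f) = false by rewrite eq_sym; apply/negbTE.
rewrite {1}/xsub; case Hf: (elayer f) => [|[|[|n]]] /=.
- by rewrite ef mulr0 addr0.
- by rewrite addr0 /xsub Hf.
- by rewrite add0r /xsub Hf.
- by rewrite ef mulr0 addr0.
Qed.

Lemma sum_le_card (R : realFieldType) (I : finType) (P Q : pred I) (t : I -> R) c :
  (forall i, P i -> t i <= (if Q i then c else 0)) ->
  \sum_(i | P i) t i <= #|[set i | P i && Q i]|%:R * c.
Proof.
move=> H; apply: le_trans (ler_sum _ H) _.
by rewrite -big_mkcondr sum_const_pred.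
Qed.

Lemma card_le1_R (R : realFieldType) (I : finType) (A : {set I}) (x : R) : 0 <= x ->
  (forall i j, i \in A -> j \in A -> i = j) -> #|A|%:R * x <= x.
Proof.
move=> x0 H; rewrite -[X in _ <= X]mul1r ler_wpM2r // (_ : 1 = 1%:R) // ler_nat.
by apply/card_le1_eqP => i j Hi Hj; rewrite (H i j Hi Hj).
Qed.

Lemma edge_l1 m k (f : edge m k) : elayer f = 1%N ->
  [/\ layer (tail f) = 0%N, Sv (tail f) = set0 & #|Se f| = k].
Proof.
rewrite /elayer /Se => hl; case: (adj_inv (valP f)) => [[]|[]|[]];
  rewrite -/(tail f) -/(Defs.head f) ?hl //.
Qed.

Lemma edge_l2 m k (f : edge m k) : elayer f = 2%N ->
  [/\ layer (tail f) = 1%N, #|Sv (tail f)| = k & Sv (tail f) \subset Se f].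
Proof.
rewrite /elayer /Se => hl; case: (adj_inv (valP f)) => [[]|[]|[]];
  rewrite -/(tail f) -/(Defs.head f) ?hl //.
Qed.

Lemma edge_l3 m k (f : edge m k) : elayer f = 3%N ->
  [/\ layer (tail f) = 2%N, #|Sv (tail f)| = k.*2, #|Se f| = k & Se f \subset Sv (tail f)].
Proof.
rewrite /elayer /Se => hl; case: (adj_inv (valP f)) => [[]|[]|[]];
  rewrite -/(tail f) -/(Defs.head f) ?hl //.
Qed.

Lemma l1_uniq m k (f1 f2 : edge m k) : elayer f1 = 1%N -> elayer f2 = 1%N ->
  Se f1 = Se f2 -> f1 = f2.
Proof.
move=> h1 h2 E; have [t1 s1 _] := edge_l1 h1; have [t2 s2 _] := edge_l1 h2.
apply: edge_eq; first by apply: vtx_eq; rewrite ?t1 ?t2 ?s1 ?s2.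
by apply: vtx_eq; [rewrite -!/(elayer _) h1 h2 | exact: E].
Qed.

Lemma neq_layer m k (e f : edge m k) a b : elayer e = a -> elayer f = b -> a <> b ->
  (e == f) = false.
Proof. by move=> ha hb ab; apply/negbTE/eqP => E; apply: ab; rewrite -ha -hb E. Qed.

Lemma case1 (R : realFieldType) m k (e : edge m k) : elayer e = 1%N ->
  \sum_(f | elayer f == 1%N) xa R f * xsub R f e <= xa R e /\
  \sum_(f | elayer f == 2%N) xa R f * xsub R f e <= xa R e.
Proof.
move=> le; have /andP[xe0 _] := xa01 R e.
split.
  apply: le_trans (sum_le_card (Q := fun f => f == e) (c := xa R e) _) _.
    move=> f /eqP hl; rewrite /xsub hl; case: (eqVneq f e) => [->|ne].
      by rewrite mulr1 lexx.
    have ef : (e == f) = false by rewrite eq_sym; apply/negbTE.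
    by rewrite ?ef le; case: (inD f e); rewrite mulr0 lexx.
  by apply: card_le1_R => // i j; rewrite !inE => /andP[_ /eqP ->] /andP[_ /eqP ->].
apply: le_trans (sum_le_card (Q := fun f => false) (c := xa R e) _) _.
  move=> f /eqP hl; rewrite /xsub hl le /=.
  rewrite (neq_layer le hl) //.
  by rewrite mulr0.
by apply: card_le1_R => // i j; rewrite !inE andbF.
Qed.

Lemma case2 (R : realFieldType) m k (e : edge m k) : elayer e = 2%N ->
  \sum_(f | elayer f == 1%N) xa R f * xsub R f e <= xa R e /\
  \sum_(f | elayer f == 2%N) xa R f * xsub R f e <= xa R e.
Proof.
move=> le; have /andP[xe0 _] := xa01 R e.
have [tl _ _] := edge_l2 le.
split.
  apply: le_trans (sum_le_card (Q := fun f => inD f e) (c := xa R e) _) _.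
    move=> f /eqP hl; rewrite /xsub hl.
    rewrite (neq_layer le hl) //.
    move: (le); rewrite /elayer => le'; rewrite le'; case: (inD f e); last by rewrite mulr0 lexx.
    by rewrite /xa hl /elayer le' lexx.
  apply: card_le1_R => // i j; rewrite !inE => /andP[/eqP hi Di] /andP[/eqP hj Dj].
  have H : forall f : edge m k, elayer f = 1%N -> inD f e -> Defs.head f = tail e.
    move=> f hf /reachQ /orP[/eqP //|/andP[lt _]].
    by move: lt; rewrite tl -/(elayer f) hf.
  apply: l1_uniq => //; rewrite /Se (H i) ?(H j) //.
apply: le_trans (sum_le_card (Q := fun f => f == e) (c := xa R e) _) _.
  move=> f /eqP hl; rewrite /xsub hl le /= orbF.
  case: (eqVneq f e) => [->|ne]; first by rewrite ?eqxx mulr1 lexx.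
  by rewrite ?mulr0 ?lexx.
by apply: card_le1_R => // i j; rewrite !inE => /andP[_ /eqP ->] /andP[_ /eqP ->].
Qed.

Lemma case3 (R : realFieldType) m k (e : edge m k) : (0 < k)%N -> (k.*2 <= m)%N ->
  elayer e = 3%N ->
  \sum_(f | elayer f == 1%N) xa R f * xsub R f e <= xa R e /\
  \sum_(f | elayer f == 2%N) xa R f * xsub R f e <= xa R e.
Proof.
move=> k0 km le; have /andP[xe0 _] := xa01 R e.
have le' : layer (Defs.head e) = 3%N by [].
have [tl Vc Wc WV] := edge_l3 le.
set V := Sv (tail e) in Vc WV; set W := Se e in Wc WV.
have a0 : (binR R (m - k) k) != 0 by rewrite /binR pnatr_eq0 -lt0n bin_gt0; lia.
have b0 : (binR R m k) != 0 by rewrite /binR pnatr_eq0 -lt0n bin_gt0; lia.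
have c0 : (binR R k.*2 k) != 0 by rewrite /binR pnatr_eq0 -lt0n bin_gt0; lia.
have xae : xa R e = (binR R (m - k) k)^-1 by rewrite /xa /elayer le'.
split.
  pose g (U : {set 'I_m}) : R := (binR R (m - k) k)^-1 * (binR R (m - k) k / binR R m k /
        binR R (m - k.*2 + #|W :&: U|) #|W :&: U|).
  rewrite (_ : \sum_(f | elayer f == 1%N) xa R f * xsub R f e = \sum_(f | (elayer f == 1%N) && inD f e) g (Se f)); last first.
    rewrite big_mkcondr; apply: eq_bigr => f /eqP hl.
    rewrite /xsub hl (neq_layer le hl) // /xa hl.
    by case: (inD f e); rewrite ?mulr0 // /elayer le'.
  have SI := sum_inj_le (P := fun f => (elayer f == 1%N) && inD f e) (h := @Se m k) (g := g) (Q := fun U : {set 'I_m} => (U \subset V) && (#|U| == k)).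
  apply: le_trans (SI _ _ _) _.
  - move=> f1 f2; rewrite !unfold_in => /andP[/eqP h1 _] /andP[/eqP h2 _]; exact: l1_uniq.
  - move=> f /andP[/eqP hl /reachQ /orP[/eqP E|/andP[_ imp]]].
      by move: tl; rewrite -E -/(elayer f) hl.
    have [_ _ ->] := edge_l1 hl; rewrite eqxx andbT.
    by move: imp; rewrite -/(elayer f) hl tl /=.
  - move=> U _; rewrite /g /binR; apply: mulr_ge0; first by rewrite invr_ge0 ler0n.
    by rewrite !divr_ge0 ?ler0n.
  rewrite /g; under eq_bigr do rewrite mulrA setIC.
  rewrite -mulr_sumr (sum_by_inter (fun j => (binR R (m - k.*2 + j) j)^-1) WV Wc Vc).
  rewrite /binR sum_vdm xae.
  have -> : (k + (m - k.*2 + k) = m)%N by lia.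
  have -> : (m - k.*2 + k = m - k)%N by lia.
  move: a0 b0; rewrite /binR => a0 b0.
  rewrite le_eqVlt; apply/orP; left; apply/eqP; field; by apply/andP.
apply: le_trans (sum_le_card (Q := fun f => inD f e)
   (c := (binR R (m - k) k)^-1 * (binR R k.*2 k)^-1) _) _.
  move=> f /eqP hl; rewrite /xsub hl (neq_layer le hl) // /elayer le' /=.
  by case: (inD f e); rewrite /xa hl ?mulr1 ?mulr0 ?lexx.
apply: (@le_trans _ _ ('C(k.*2, k)%:R * ((binR R (m - k) k)^-1 * (binR R k.*2 k)^-1))).
  apply: ler_wpM2r; first by rewrite mulr_ge0 // invr_ge0 ler0n.
  rewrite ler_nat -Vc -cards_draws.
  apply: (card_inj_le (h := fun f : edge m k => Sv (tail f))).
  - have H : forall f : edge m k, elayer f = 2%N -> inD f e -> Defs.head f = tail e.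
      move=> f hf /reachQ /orP[/eqP //|/andP[lt _]].
      by move: lt; rewrite tl -/(elayer f) hf.
    move=> f1 f2; rewrite !unfold_in => /andP[/eqP h1 D1] /andP[/eqP h2 D2] E.
    have [t1 _ _] := edge_l2 h1; have [t2 _ _] := edge_l2 h2.
    apply: edge_eq; first by apply: vtx_eq; rewrite ?t1 ?t2.
    by rewrite H ?H.
  - move=> f /andP[/eqP hl /reachQ /orP[/eqP E|/andP[lt _]]]; last first.
      by move: lt; rewrite tl -/(elayer f) hl.
    have [_ -> S] := edge_l2 hl; rewrite eqxx andbT.
    by move: S; rewrite /Se E.
move: c0; rewrite xae /binR => c0.
by rewrite mulrCA mulfV ?mulr1.
Qed.


Lemma elayer_cases m k (e : edge m k) :
  [\/ elayer e = 1%N, elayer e = 2%N | elayer e = 3%N].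
Proof.
rewrite /elayer; case: (adj_inv (valP e)) => [[_ _ -> _]|[_ _ -> _ _]|[_ _ -> _ _]].
- exact: Or31.
- exact: Or32.
- exact: Or33.
Qed.

Unset Implicit Arguments.
Theorem lemma4 (R : realFieldType) (m k : nat) :
  (0 < k)%N -> (k.*2 <= m)%N ->
  forall e : edge m k,
    xa R e <= s_prob R e <= 6 * xa R e.
Proof.
move=> k0 km e; apply/andP; split.
  by have := s_lower R e; rewrite xsub_diag mulr1.
apply: le_trans (s_upper R e) _; apply: le_trans (decomp R e) _.
rewrite xsub_diag mulr1.
have [H1 H2] : \sum_(f | elayer f == 1%N) xa R f * xsub R f e <= xa R e /\
  \sum_(f | elayer f == 2%N) xa R f * xsub R f e <= xa R e.
  case: (elayer_cases e) => le; [exact: case1 | exact: case2 | exact: case3].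
have /andP[x0 _] := xa01 R e.
lra.
Qed.
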